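(* Let $C$ be a linear code over $\mathbb{Z}_4+u\mathbb{Z}_4$ of length $n$ and let $C^{\perp}$ be its dual. Then $$swe_{C^{\perp}}(X,Y,Z,W,S)=\frac{1}{|C|}\,swe_C\big(6S+4W+X+Y+4Z,\ 6S-4W+X+Y-4Z,\ -2W+X-Y+2Z,\ 2W+X-Y-2Z,\ -2S+X+Y\big).$$
   Context: $\mathbb{Z}_4+u\mathbb{Z}_4$ is the commutative ring of characteristic $4$ with $u^2=0$. A linear code of length $n$ is a submodule of $(\mathbb{Z}_4+u\mathbb{Z}_4)^n$; its dual $C^\perp$ is taken with respect to the Euclidean inner product $\sum_i x_iy_i$ computed in the ring. For a codeword $c$, let $n_0(c)$ be the number of coordinates equal to $0$, $n_4(c)$ the number equal to $2u$, $n_3(c)$ the number in $\{1+u,1+2u,3+2u,3+3u\}$, $n_1(c)$ the number in $\{1,1+3u,3,3+u\}$, and $n_2(c)$ the number in $\{2,u,3u,2+u,2+2u,2+3u\}$. The symmetrized weight enumerator is $swe_C(X,Y,Z,W,S)=\sum_{c\in C}X^{n_0(c)}Y^{n_4(c)}Z^{n_3(c)}W^{n_1(c)}S^{n_2(c)}$. *)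

(* Defs.v *)
From HB Require Import structures.
From mathcomp Require Import all_boot all_order all_algebra.
Set Implicit Arguments. Unset Strict Implicit. Unset Printing Implicit Defensive.
Import Order.TTheory GRing.Theory Num.Theory.
Local Open Scope ring_scope.

(* The ring Z4 + u Z4 (u^2 = 0): the element a + u b is the pair (a, b). *)
Definition Z4u : finType := ('Z_4 * 'Z_4)%type.

Definition z4u_add (x y : Z4u) : Z4u := (x.1 + y.1, x.2 + y.2).
Definition z4u_mul (x y : Z4u) : Z4u := (x.1 * y.1, x.1 * y.2 + x.2 * y.1).
Definition z4u_zero : Z4u := (0, 0).

Definition word (n : nat) : finType := {ffun 'I_n -> Z4u}.

Definition wadd n (x y : word n) : word n := [ffun i => z4u_add (x i) (y i)].
Definition wscale n (r : Z4u) (x : word n) : word n := [ffun i => z4u_mul r (x i)].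
Definition wzero n : word n := [ffun _ => z4u_zero].

Definition linear_code n (C : {set word n}) : Prop :=
  [/\ wzero n \in C,
      (forall x y, x \in C -> y \in C -> wadd x y \in C) &
      (forall r x, x \in C -> wscale r x \in C)].

Definition inner n (x y : word n) : Z4u :=
  foldr z4u_add z4u_zero [seq z4u_mul (x i) (y i) | i <- enum 'I_n].

Definition dual n (C : {set word n}) : {set word n} :=
  [set y | [forall x in C, inner x y == z4u_zero]].

Definition cls0 : pred Z4u := pred1 (0, 0).
Definition cls4 : pred Z4u := pred1 (0, 2).
Definition cls3 : pred Z4u := [pred x | x \in [:: (1, 1); (1, 2); (3, 2); (3, 3)]].
Definition cls1 : pred Z4u := [pred x | x \in [:: (1, 0); (1, 3); (3, 0); (3, 1)]].
Definition cls2 : pred Z4u :=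
  [pred x | x \in [:: (2, 0); (0, 1); (0, 3); (2, 1); (2, 2); (2, 3)]].

Definition ncount n (P : pred Z4u) (c : word n) : nat := #|[set i | P (c i)]|.

Definition swe (R : comNzRingType) n (C : {set word n}) (X Y Z W S : R) : R :=
  \sum_(c in C) (X ^+ ncount cls0 c * Y ^+ ncount cls4 c * Z ^+ ncount cls3 c
                 * W ^+ ncount cls1 c * S ^+ ncount cls2 c).

(* Main.v *)
From HB Require Import structures.
Require Import Defs.
From mathcomp Require Import all_boot all_order all_algebra ring.
From mathcomp.real_closed Require Import complex.
Import GRing.Theory Num.Theory.
Local Open Scope ring_scope.

Definition ord4 : seq 'Z_4 := [:: @Ordinal 4 0 isT; @Ordinal 4 1 isT; @Ordinal 4 2 isT; @Ordinal 4 3 isT].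
Definition Z4list : seq Z4u := [seq (a,b) | a <- ord4, b <- ord4].

Lemma mem4 (x : 'Z_4) : x \in ord4.
Proof. by case: x => [[|[|[|[|m]]]] H]. Qed.
Lemma memZ (t : Z4u) : t \in Z4list.
Proof. case: t => a b. by apply/allpairsP; exists (a, b); rewrite !mem4. Qed.

Lemma allZ (P : pred Z4u) : all P Z4list -> forall t, P t.
Proof. by move/allP => H t; apply: H; apply: memZ. Qed.
Arguments allZ [P].

Definition two_u : Z4u := (0, 2%:R).
Definition m1 : Z4u := (-1, 0).

Lemma z4u_mulA a b c : z4u_mul (z4u_mul a b) c = z4u_mul a (z4u_mul b c).
Proof.
have H : all (fun a => all (fun b => all (fun c => z4u_mul (z4u_mul a b) c == z4u_mul a (z4u_mul b c)) Z4list) Z4list) Z4list.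
  by vm_compute.
by move: (allZ H a) => /allZ /(_ b) /allZ /(_ c) /eqP.
Qed.

Lemma z4u_mulDr a b c : z4u_mul a (z4u_add b c) = z4u_add (z4u_mul a b) (z4u_mul a c).
Proof.
have H : all (fun a => all (fun b => all (fun c => z4u_mul a (z4u_add b c) == z4u_add (z4u_mul a b) (z4u_mul a c)) Z4list) Z4list) Z4list.
  by vm_compute.
by move: (allZ H a) => /allZ /(_ b) /allZ /(_ c) /eqP.
Qed.

Lemma z4u_mulDl a b c : z4u_mul (z4u_add a b) c = z4u_add (z4u_mul a c) (z4u_mul b c).
Proof.
have H : all (fun a => all (fun b => all (fun c => z4u_mul (z4u_add a b) c == z4u_add (z4u_mul a c) (z4u_mul b c)) Z4list) Z4list) Z4list.
  by vm_compute.
by move: (allZ H a) => /allZ /(_ b) /allZ /(_ c) /eqP.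
Qed.

Lemma z4u_mul0 a : z4u_mul a z4u_zero = z4u_zero.
Proof.
have H : all (fun a => z4u_mul a z4u_zero == z4u_zero) Z4list by vm_compute.
by move: (allZ H a) => /eqP.
Qed.

Lemma z4u_addK a b : z4u_add (z4u_add a b) (z4u_mul m1 b) = a.
Proof.
have H : all (fun a => all (fun b => z4u_add (z4u_add a b) (z4u_mul m1 b) == a) Z4list) Z4list by vm_compute.
by move: (allZ H a) => /allZ /(_ b) /eqP.
Qed.

Lemma z4u_two_u t : t != z4u_zero -> exists r, z4u_mul r t = two_u.
Proof.
have H : all (fun t => (t != z4u_zero) ==> has (fun r => z4u_mul r t == two_u) Z4list) Z4list by vm_compute.
move: (allZ H t) => /implyP H' /H' /hasP [r _ /eqP Hr]; by exists r.
Qed.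

Lemma cls_one t : (cls0 t + cls4 t + cls3 t + cls1 t + cls2 t = 1)%N.
Proof.
have H : all (fun t => (cls0 t + cls4 t + cls3 t + cls1 t + cls2 t == 1)%N) Z4list by vm_compute.
by move: (allZ H t) => /eqP.
Qed.

Section Gen.
Variable K : comNzRingType.
Variables (j hf : K).
Hypothesis hj : j * j = -1.
Hypothesis hh : hf * 2 = 1.

Definition chi (t : Z4u) : K := j ^+ (nat_of_ord t.1 + nat_of_ord t.2).

Lemma j4 : j ^+ 4 = 1.
Proof. by rewrite (exprM j 2 2) !expr2 hj mulrNN mulr1. Qed.

Lemma jmod k : j ^+ k = j ^+ (k %% 4).
Proof. by rewrite {1}(divn_eq k 4) exprD mulnC exprM j4 expr1n mul1r. Qed.

Lemma chiD s t : chi (z4u_add s t) = chi s * chi t.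
Proof.
rewrite /chi /= !exprD [j ^+ ((_ + _) %% 4)]jmod [j ^+ (_ %% 4)]jmod.
rewrite -!jmod !exprD; ring.
Qed.

Lemma chi0 : chi z4u_zero = 1.
Proof. by []. Qed.

Lemma chi_two_u : chi two_u = -1.
Proof. by rewrite /chi /= expr2 hj. Qed.

Lemma chi_foldr (s : seq Z4u) : chi (foldr z4u_add z4u_zero s) = \prod_(t <- s) chi t.
Proof. elim: s => [|a s IH]; first by rewrite big_nil chi0. by rewrite big_cons /= chiD IH. Qed.

Lemma chi_inner n (x y : word n) : chi (inner x y) = \prod_i chi (z4u_mul (x i) (y i)).
Proof. by rewrite /inner chi_foldr big_map big_enum. Qed.


Lemma inner_scale n r (x y : word n) : inner (wscale r x) y = z4u_mul r (inner x y).
Proof.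
rewrite /inner; elim: (enum 'I_n) => [|i s IH] /=; first by rewrite z4u_mul0.
by rewrite IH ffunE z4u_mulA z4u_mulDr.
Qed.

Lemma chi_inner_add n (x x1 y : word n) :
  chi (inner (wadd x x1) y) = chi (inner x y) * chi (inner x1 y).
Proof.
rewrite !chi_inner -big_split /=; apply: eq_bigr => i _.
by rewrite ffunE z4u_mulDl chiD.
Qed.

Lemma orth n (C : {set word n}) (y : word n) : linear_code C ->
  \sum_(x in C) chi (inner x y) = if y \in dual C then (#|C|)%:R else 0.
Proof.
case=> C0 Cadd Cscale.
case: ifP => Hy.
  rewrite inE in Hy; move/forall_inP: Hy => Hy.
  rewrite (eq_bigr (fun _ => 1)); first by rewrite sumr_const.
  by move=> x /Hy /eqP ->; rewrite chi0.
move/negbT: Hy; rewrite inE negb_forall_in => /exists_inP [x0 Hx0 Hne].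
have [r Hr] := z4u_two_u _ Hne.
set x1 := wscale r x0.
have Hx1 : x1 \in C by apply: Cscale.
have Hi1 : chi (inner x1 y) = -1 by rewrite inner_scale Hr chi_two_u.
set h := fun x => wadd x x1.
set hi := fun x => wadd x (wscale m1 x1).
have hK : cancel h hi.
  by move=> x; apply/ffunP => i; rewrite /h /hi !ffunE z4u_addK.
have hC x : (h x \in C) = (x \in C).
  apply/idP/idP => Hx; last by apply: Cadd.
  by rewrite -(hK x); apply: Cadd => //; apply: Cscale.
set S := \sum_(x in C) _.
have HS : S = - S.
  rewrite -sumrN /S big_mkcond (reindex_inj (can_inj hK)) /=.
  rewrite [RHS]big_mkcond /=.
  apply: eq_bigr => x _; rewrite hC; case: ifP => _ //.
  by rewrite /h chi_inner_add Hi1 mulrN1.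
have : S + S = 0 by rewrite {2}HS subrr.
move=> HS2.
by rewrite -[S]mul1r -hh -mulrA mulr_natl mulr2n HS2 mulr0.
Qed.

Definition fh (f : Z4u -> K) (s : Z4u) : K := \sum_t chi (z4u_mul s t) * f t.

Lemma fourier n (f : Z4u -> K) (x : word n) :
  \sum_(y : word n) chi (inner x y) * \prod_i f (y i) = \prod_i fh f (x i).
Proof.
rewrite /fh bigA_distr_bigA /=; apply: eq_bigr => y _.
by rewrite chi_inner -big_split.
Qed.

Lemma macw n (C : {set word n}) (f : Z4u -> K) : linear_code C ->
  (#|C|)%:R * \sum_(y in dual C) \prod_i f (y i) = \sum_(x in C) \prod_i fh f (x i).
Proof.
move=> HC.
under [RHS]eq_bigr => x _ do rewrite -fourier.
rewrite exchange_big /= mulr_sumr [LHS]big_mkcond /=.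
apply: eq_bigr => y _; rewrite -mulr_suml orth //.
by case: ifP; rewrite ?mul0r.
Qed.
End Gen.

Definition bi (b : bool) : int := if b then 1 else 0.
Definition re (p : Z4u) : int := match ((nat_of_ord p.1 + nat_of_ord p.2) %% 4)%N with 0 => 1 | 2 => -1 | _ => 0 end.
Definition im (p : Z4u) : int := match ((nat_of_ord p.1 + nat_of_ord p.2) %% 4)%N with 1 => 1 | 3 => -1 | _ => 0 end.
Definition isum (f : Z4u -> int) := foldr (fun t acc => f t + acc) 0 Z4list.

Definition coefs (s : Z4u) : seq int :=
  [:: isum (fun t => re (z4u_mul s t) * bi (cls0 t));
      isum (fun t => re (z4u_mul s t) * bi (cls4 t));
      isum (fun t => re (z4u_mul s t) * bi (cls3 t));
      isum (fun t => re (z4u_mul s t) * bi (cls1 t));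
      isum (fun t => re (z4u_mul s t) * bi (cls2 t));
      isum (fun t => im (z4u_mul s t) * bi (cls0 t));
      isum (fun t => im (z4u_mul s t) * bi (cls4 t));
      isum (fun t => im (z4u_mul s t) * bi (cls3 t));
      isum (fun t => im (z4u_mul s t) * bi (cls1 t));
      isum (fun t => im (z4u_mul s t) * bi (cls2 t))].

Definition target (s : Z4u) : seq int :=
  if cls0 s then [:: 1; 1; 4; 4; 6; 0; 0; 0; 0; 0]
  else if cls4 s then [:: 1; 1; -4; -4; 6; 0; 0; 0; 0; 0]
  else if cls3 s then [:: 1; -1; 2; -2; 0; 0; 0; 0; 0; 0]
  else if cls1 s then [:: 1; -1; -2; 2; 0; 0; 0; 0; 0; 0]
  else [:: 1; 1; 0; 0; -2; 0; 0; 0; 0; 0].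

Lemma coefsE s : coefs s = target s.
Proof.
have H : all (fun s => coefs s == target s) Z4list by vm_compute.
by move: (allZ H s) => /eqP.
Qed.

Section Gen2.
Variable K : comNzRingType.
Variable j : K.
Hypothesis hj : j * j = -1.

Definition vv (X Y Z W S : K) (t : Z4u) : K :=
  if cls0 t then X else if cls4 t then Y else if cls3 t then Z
  else if cls1 t then W else S.

Lemma vv_pow X Y Z W S t :
  vv X Y Z W S t = X ^+ cls0 t * Y ^+ cls4 t * Z ^+ cls3 t * W ^+ cls1 t * S ^+ cls2 t.
Proof.
move: (cls_one t); rewrite /vv.
case: (cls0 t); case: (cls4 t); case: (cls3 t); case: (cls1 t); case: (cls2 t) => //= _;
  by rewrite ?expr0 ?expr1 ?mul1r ?mulr1.
Qed.

Lemma vv_lin X Y Z W S t :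
  vv X Y Z W S t = X * (bi (cls0 t))%:~R + Y * (bi (cls4 t))%:~R + Z * (bi (cls3 t))%:~R
                 + W * (bi (cls1 t))%:~R + S * (bi (cls2 t))%:~R.
Proof.
move: (cls_one t); rewrite /vv /bi.
case: (cls0 t); case: (cls4 t); case: (cls3 t); case: (cls1 t); case: (cls2 t) => //= _;
  ring.
Qed.

Lemma sum_ncount n (P : pred Z4u) (c : word n) :
  (\sum_i (P (c i) : nat))%N = ncount P c.
Proof.
rewrite /ncount -sum1_card [RHS]big_mkcond /=; apply: eq_bigr => i _.
by rewrite inE; case: (P (c i)).
Qed.

Lemma swe_prod n (C : {set word n}) X Y Z W S :
  swe C X Y Z W S = \sum_(c in C) \prod_i vv X Y Z W S (c i).
Proof.
rewrite /swe; apply: eq_bigr => c _.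
under [RHS]eq_bigr do rewrite vv_pow.
by rewrite !big_split /= !prodrXr !sum_ncount.
Qed.

Lemma chi_reim p : @chi K j p = (re p)%:~R + j * (im p)%:~R.
Proof.
rewrite /chi /re /im (@jmod K j hj) /=.
have : ((p.1 + p.2) %% 4 < 4)%N by rewrite ltn_mod.
case: ((p.1 + p.2) %% 4)%N => [|[|[|[|k]]]] //= _.
- by rewrite expr0; ring.
- by rewrite expr1; ring.
- by rewrite expr2 hj; ring.
- by rewrite exprS expr2 hj; ring.
Qed.

Lemma sumZ (F : Z4u -> K) : \sum_t F t = \sum_(t <- Z4list) F t.
Proof.
apply: perm_big; apply: uniq_perm.
- exact: index_enum_uniq.
- by vm_compute.
- by move=> t; rewrite mem_index_enum memZ.
Qed.

Lemma sum_intr (f : Z4u -> int) : \sum_(t <- Z4list) (f t)%:~R = (isum f)%:~R :> K.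
Proof.
rewrite /isum; elim: Z4list => [|a s IH]; first by rewrite big_nil.
by rewrite big_cons IH /= intrD.
Qed.

Lemma expand (a b c0 c4 c3 c1 c2 : int) (X Y Z W S : K) :
  (a%:~R + j * b%:~R) * (X * c0%:~R + Y * c4%:~R + Z * c3%:~R + W * c1%:~R + S * c2%:~R)
  = X * (a * c0)%:~R + Y * (a * c4)%:~R + Z * (a * c3)%:~R + W * (a * c1)%:~R + S * (a * c2)%:~R
    + j * (X * (b * c0)%:~R + Y * (b * c4)%:~R + Z * (b * c3)%:~R + W * (b * c1)%:~R + S * (b * c2)%:~R).
Proof. rewrite !intrM; ring. Qed.

Lemma fh_vv (X Y Z W S : K) s :
  @fh K j (vv X Y Z W S) s =
  vv (6 * S + 4 * W + X + Y + 4 * Z) (6 * S - 4 * W + X + Y - 4 * Z)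
     (- (2 * W) + X - Y + 2 * Z) (2 * W + X - Y - 2 * Z) (- (2 * S) + X + Y) s.
Proof.
rewrite /fh sumZ.
under eq_bigr => t _ do rewrite chi_reim vv_lin expand.
rewrite !big_split /= -!mulr_sumr !big_split /= -!mulr_sumr !sum_intr.
move: (coefsE s); rewrite /coefs /target /vv.
case: (cls0 s); first by case=> -> -> -> -> -> -> -> -> -> ->; ring.
case: (cls4 s); first by case=> -> -> -> -> -> -> -> -> -> ->; ring.
case: (cls3 s); first by case=> -> -> -> -> -> -> -> -> -> ->; ring.
case: (cls1 s); first by case=> -> -> -> -> -> -> -> -> -> ->; ring.
by case=> -> -> -> -> -> -> -> -> -> ->; ring.
Qed.
End Gen2.

Lemma main_gen (K : comNzRingType) (j hf : K) (hj : j * j = -1) (hh : hf * 2 = 1)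
  n (C : {set word n}) (X Y Z W S : K) : linear_code C ->
  (#|C|)%:R * swe (dual C) X Y Z W S =
    swe C (6 * S + 4 * W + X + Y + 4 * Z)
          (6 * S - 4 * W + X + Y - 4 * Z)
          (- (2 * W) + X - Y + 2 * Z)
          (2 * W + X - Y - 2 * Z)
          (- (2 * S) + X + Y).
Proof.
move=> HC; rewrite swe_prod (@macw K j hf hj hh) // swe_prod.
apply: eq_bigr => x _; apply: eq_bigr => i _.
by rewrite (@fh_vv K j hj).
Qed.

Section Emb.
Variable R : fieldType.
Definition emb (x : R) : R[i] := Complex x 0.
Lemma emb_additive : additive emb.
Proof. by move=> a b; apply/eqP; rewrite eq_complex /= oppr0 addr0 !eqxx. Qed.
Lemma emb_multiplicative : multiplicative emb.
Proof.
split; last by [].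
by move=> a b; apply/eqP; rewrite eq_complex /= !mulr0 !mul0r subr0 addr0 !eqxx.
Qed.
HB.instance Definition _ := GRing.isAdditive.Build R R[i] emb emb_additive.
HB.instance Definition _ := GRing.isMultiplicative.Build R R[i] emb emb_multiplicative.
Lemma emb_inj : injective emb.
Proof. by move=> a b [->]. Qed.
End Emb.
Arguments emb {R}.

Lemma emb_swe (R : fieldType) n (C : {set word n}) (X Y Z W S : R) :
  emb (swe C X Y Z W S) = swe C (emb X) (emb Y) (emb Z) (emb W) (emb S).
Proof.
rewrite /swe rmorph_sum; apply: eq_bigr => c _.
by rewrite !rmorphM !rmorphXn.
Qed.

Theorem theorem3p7 (n : nat) (C : {set word n}) (R : numFieldType)
    (X Y Z W S : R) :
  linear_code C ->
  swe (dual C) X Y Z W S =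
  (#|C|%:R)^-1 *
    swe C (6 * S + 4 * W + X + Y + 4 * Z)
          (6 * S - 4 * W + X + Y - 4 * Z)
          (- (2 * W) + X - Y + 2 * Z)
          (2 * W + X - Y - 2 * Z)
          (- (2 * S) + X + Y).
Proof.
move=> HC.
have C0 : (#|C|%:R : R) != 0.
  rewrite pnatr_eq0 -lt0n; apply/card_gt0P; exists (wzero n); by case: HC.
apply: (mulfI C0); rewrite mulrA mulfV // mul1r.
apply: (@emb_inj R).
have hj : (Complex 0 1 : R[i]) * Complex 0 1 = -1.
  by apply/eqP; rewrite eq_complex /= !mulr0 !mul0r mulr1 sub0r addr0 oppr0 !eqxx.
have h2 : (2 : R) != 0 by rewrite pnatr_eq0.
have hh : emb (2^-1 : R) * 2 = 1.
  by rewrite -(rmorph_nat (@emb R) 2) -rmorphM mulVf // rmorph1.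
have -> : emb (#|C|%:R * swe (dual C) X Y Z W S) =
    #|C|%:R * swe (dual C) (emb X) (emb Y) (emb Z) (emb W) (emb S).
  by rewrite rmorphM rmorph_nat; congr (_ * _); exact: emb_swe.
rewrite emb_swe (@main_gen _ _ _ hj hh) //.
by rewrite !rmorphD ?rmorphB !rmorphN !rmorphM !rmorph_nat.
Qed.
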